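(* Let $(D,\mu,\alpha)$ be a Hom-associative algebra over a field $k$ and let $T:D\otimes D\to D\otimes D$ be a linear map. Assume there exist linear maps $\tilde T_1,\tilde T_2:D\otimes D\otimes D\to D\otimes D\otimes D$ such that $(\alpha\otimes\alpha)\circ T=T\circ(\alpha\otimes\alpha)$, $T\circ(\alpha\otimes\mu)=(\alpha\otimes\mu)\circ\tilde T_1\circ(T\otimes \mathrm{id}_D)$, $T\circ(\mu\otimes\alpha)=(\mu\otimes\alpha)\circ\tilde T_2\circ(\mathrm{id}_D\otimes T)$, $\tilde T_1\circ(T\otimes \mathrm{id}_D)\circ(\mathrm{id}_D\otimes T)=\tilde T_2\circ(\mathrm{id}_D\otimes T)\circ(T\otimes \mathrm{id}_D)$. Then $(D,\mu\circ T,\alpha)$ is also a Hom-associative algebra.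
   Context: All algebras are over a field $k$ and are not assumed unital. A Hom-associative algebra is a triple $(A,\mu,\alpha)$ with $A$ a vector space and $\mu:A\otimes A\to A$ (written $\mu(a\otimes a')=aa'$), $\alpha:A\to A$ linear maps such that $\alpha(aa')=\alpha(a)\alpha(a')$ and $\alpha(a)(a'a'')=(aa')\alpha(a'')$ for all $a,a',a''\in A$. Such a $T$ is called a Hom-pseudotwistor with companions $\tilde T_1,\tilde T_2$. *)

(* Defs.v *)
(* Tensor products are given by their universal property. *)
From HB Require Import structures.
From mathcomp Require Import all_boot all_algebra.
From Stdlib Require Import ClassicalEpsilon.
Set Implicit Arguments. Unset Strict Implicit. Unset Printing Implicit Defensive.
Import GRing.Theory.
Local Open Scope ring_scope.

Section Tensor.
Variable K : fieldType.

Definition is_lin (U V : lmodType K) (f : U -> V) : Prop :=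
  forall (a : K) (x y : U), f (a *: x + y) = a *: f x + f y.

Definition bilin (U V W : lmodType K) (f : U -> V -> W) : Prop :=
  (forall v, is_lin (fun u => f u v)) /\ (forall u, is_lin (f u)).

Definition trilin (U V W X : lmodType K) (f : U -> V -> W -> X) : Prop :=
  (forall v w, is_lin (fun u => f u v w)) /\
  (forall u w, is_lin (fun v => f u v w)) /\
  (forall u v, is_lin (f u v)).

(* [t : U -> V -> W] exhibits W as the tensor product U (x) V, t u v = u (x) v *)
Definition is_tensor2 (U V W : lmodType K) (t : U -> V -> W) : Prop :=
  bilin t /\
  forall (X : lmodType K) (f : U -> V -> X), bilin f ->
    exists! g : W -> X, is_lin g /\ forall u v, g (t u v) = f u v.

Definition is_tensor3 (U V W X : lmodType K) (t : U -> V -> W -> X) : Prop :=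
  trilin t /\
  forall (Y : lmodType K) (f : U -> V -> W -> Y), trilin f ->
    exists! g : X -> Y, is_lin g /\ forall u v w, g (t u v w) = f u v w.

Definition lift2 (U V W X : lmodType K) (t : U -> V -> W) (f : U -> V -> X)
  : W -> X :=
  epsilon (inhabits (fun _ => 0))
    (fun g => is_lin g /\ forall u v, g (t u v) = f u v).

Definition lift3 (U V W X Y : lmodType K) (t : U -> V -> W -> X)
  (f : U -> V -> W -> Y) : X -> Y :=
  epsilon (inhabits (fun _ => 0))
    (fun g => is_lin g /\ forall u v w, g (t u v w) = f u v w).

Variables (D DD DDD : lmodType K) (t2 : D -> D -> DD) (t3 : D -> D -> D -> DDD).

Definition tens2 (f g : D -> D) : DD -> DD :=
  lift2 t2 (fun a b => t2 (f a) (g b)).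

Definition tens_id_m (f : D -> D) (m : DD -> D) : DDD -> DD :=
  lift3 t3 (fun a b c => t2 (f a) (m (t2 b c))).

Definition tens_m_id (m : DD -> D) (f : D -> D) : DDD -> DD :=
  lift3 t3 (fun a b c => t2 (m (t2 a b)) (f c)).

Definition tensS_id (S : DD -> DD) : DDD -> DDD :=
  lift3 t3 (fun a b c => lift2 t2 (fun a' b' => t3 a' b' c) (S (t2 a b))).

Definition tens_idS (S : DD -> DD) : DDD -> DDD :=
  lift3 t3 (fun a b c => lift2 t2 (fun b' c' => t3 a b' c') (S (t2 b c))).

Definition hom_assoc (mu : DD -> D) (alpha : D -> D) : Prop :=
  [/\ is_lin mu, is_lin alpha,
      (forall a a', alpha (mu (t2 a a')) = mu (t2 (alpha a) (alpha a'))) &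
      (forall a a' a'', mu (t2 (alpha a) (mu (t2 a' a''))) =
                        mu (t2 (mu (t2 a a')) (alpha a'')))].

End Tensor.

(* Main.v *)
Require Import Defs.
From HB Require Import structures.
From mathcomp Require Import all_boot all_algebra.
From Stdlib Require Import ClassicalEpsilon.
Set Implicit Arguments. Unset Strict Implicit. Unset Printing Implicit Defensive.
Import GRing.Theory.
Local Open Scope ring_scope.

Section Aux.
Variable K : fieldType.

Lemma lin_comp (U V W : lmodType K) (f : V -> W) (g : U -> V) :
  is_lin f -> is_lin g -> is_lin (fun x => f (g x)).
Proof. by move=> Hf Hg a x y; rewrite Hg Hf. Qed.

Lemma lin_comb (U V : lmodType K) (f g : U -> V) (k : K) :
  is_lin f -> is_lin g -> is_lin (fun x => k *: f x + g x).
Proof.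
move=> Hf Hg a x y; rewrite Hf Hg !scalerDr !scalerA mulrC.
by rewrite -!addrA; congr (_ + _); rewrite addrCA.
Qed.

Lemma lift2_spec (U V W X : lmodType K) (t : U -> V -> W) (f : U -> V -> X) :
  is_tensor2 t -> bilin f ->
  is_lin (lift2 t f) /\ forall u v, lift2 t f (t u v) = f u v.
Proof.
move=> [_ H] Hf; have [g [Hg _]] := H X f Hf.
exact: (epsilon_spec _ (fun g : W -> X => is_lin g /\ forall u v, g (t u v) = f u v) (ex_intro _ g Hg)).
Qed.

Lemma lift3_spec (U V W X Y : lmodType K) (t : U -> V -> W -> X)
  (f : U -> V -> W -> Y) :
  is_tensor3 t -> trilin f ->
  is_lin (lift3 t f) /\ forall u v w, lift3 t f (t u v w) = f u v w.
Proof.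
move=> [_ H] Hf; have [g [Hg _]] := H Y f Hf.
exact: (epsilon_spec _ (fun g : X -> Y => is_lin g /\ forall u v w, g (t u v w) = f u v w) (ex_intro _ g Hg)).
Qed.

Lemma tensor2_ext (U V W X : lmodType K) (t : U -> V -> W) (g h : W -> X) :
  is_tensor2 t -> is_lin g -> is_lin h ->
  (forall u v, g (t u v) = h (t u v)) -> forall w, g w = h w.
Proof.
move=> [[Hl Hr] H] Hg Hh E.
have Hb : bilin (fun u v => g (t u v)).
  split=> [v|u]; apply: lin_comp => //.
have [g0 [_ Hu]] := H _ _ Hb.
have e1 := Hu g (conj Hg (fun _ _ => erefl)).
have e2 := Hu h (conj Hh (fun u v => esym (E u v))).
by move=> w; rewrite -e1 -e2.
Qed.

Lemma tensor3_ext (U V W X Y : lmodType K) (t : U -> V -> W -> X) (g h : X -> Y) :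
  is_tensor3 t -> is_lin g -> is_lin h ->
  (forall u v w, g (t u v w) = h (t u v w)) -> forall x, g x = h x.
Proof.
move=> [[H1 [H2 H3]] H] Hg Hh E.
have Hb : trilin (fun u v w => g (t u v w)).
  split; [|split] => p q; apply: lin_comp => //.
have [g0 [_ Hu]] := H _ _ Hb.
have e1 := Hu g (conj Hg (fun _ _ _ => erefl)).
have e2 := Hu h (conj Hh (fun u v w => esym (E u v w))).
by move=> w; rewrite -e1 -e2.
Qed.

End Aux.

Theorem proposition2p1 (K : fieldType) (D DD DDD : lmodType K)
  (t2 : D -> D -> DD) (t3 : D -> D -> D -> DDD)
  (Ht2 : is_tensor2 t2) (Ht3 : is_tensor3 t3)
  (mu : DD -> D) (alpha : D -> D) (HD : hom_assoc t2 mu alpha)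
  (T : DD -> DD) (HT : is_lin T)
  (T1 T2 : DDD -> DDD) (HT1 : is_lin T1) (HT2 : is_lin T2)
  (H1 : (tens2 t2 alpha alpha \o T) = (T \o tens2 t2 alpha alpha))
  (H2 : (T \o tens_id_m t2 t3 alpha mu) =
        (tens_id_m t2 t3 alpha mu \o T1 \o tensS_id t2 t3 T))
  (H3 : (T \o tens_m_id t2 t3 mu alpha) =
        (tens_m_id t2 t3 mu alpha \o T2 \o tens_idS t2 t3 T))
  (H4 : (T1 \o tensS_id t2 t3 T \o tens_idS t2 t3 T) =
        (T2 \o tens_idS t2 t3 T \o tensS_id t2 t3 T)) :
  hom_assoc t2 (mu \o T) alpha.
Proof.
case: HD => Hmu Hal Hmor Hass.
have [[t2l t2r] _] := Ht2.
have [[t3a [t3b t3c]] _] := Ht3.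
have tl : forall k x y v, t2 (k *: x + y) v = k *: t2 x v + t2 y v.
  by move=> k x y v; exact: t2l.
have tr : forall k x y u, t2 u (k *: x + y) = k *: t2 u x + t2 u y.
  by move=> k x y u; exact: t2r.
have Bt2 : bilin (fun a b => t2 (alpha a) (alpha b)).
  by split=> ? ? ? ? /=; rewrite Hal ?tl ?tr.
have [Lt2 St2] := lift2_spec Ht2 Bt2.
have F1 : forall x, alpha (mu x) = mu (tens2 t2 alpha alpha x).
  apply: (tensor2_ext (g := fun x => alpha (mu x))
     (h := fun x => mu (tens2 t2 alpha alpha x)) Ht2).
  - exact: (lin_comp Hal Hmu).
  - exact: (lin_comp Hmu Lt2).
  - by move=> u v; rewrite /tens2 St2 Hmor.
split.
- exact: lin_comp.
- exact: Hal.
- move=> a a' /=; rewrite F1.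
  have := congr1 (fun f => f (t2 a a')) H1; rewrite /= => ->.
  by rewrite /tens2 St2.
move=> a a' a'' /=.
have ta : forall k x y v w, t3 (k *: x + y) v w = k *: t3 x v w + t3 y v w.
  by move=> k x y v w; exact: t3a.
have tb : forall k x y u w, t3 u (k *: x + y) w = k *: t3 u x w + t3 u y w.
  by move=> k x y u w; exact: t3b.
have tc : forall k x y u v, t3 u v (k *: x + y) = k *: t3 u v x + t3 u v y.
  by move=> k x y u v; exact: t3c.
pose phi a := lift2 t2 (fun b c => t3 a b c).
pose psi c := lift2 t2 (fun a b => t3 a b c).
have Lphi : forall a, is_lin (phi a) /\ forall u v, phi a (t2 u v) = t3 a u v.
  move=> x; apply: lift2_spec => //.
have Lpsi : forall c, is_lin (psi c) /\ forall u v, psi c (t2 u v) = t3 u v c.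
  move=> x; apply: lift2_spec => //.
have phiL : forall k x y z, phi (k *: x + y) z = k *: phi x z + phi y z.
  move=> k x y; apply: (tensor2_ext (g := phi (k *: x + y))
     (h := fun z => k *: phi x z + phi y z) Ht2).
  - exact: (Lphi _).1.
  - exact: (lin_comb _ (Lphi x).1 (Lphi y).1).
  - by move=> u v; rewrite !(Lphi _).2 ta.
have psiL : forall k x y z, psi (k *: x + y) z = k *: psi x z + psi y z.
  move=> k x y; apply: (tensor2_ext (g := psi (k *: x + y))
     (h := fun z => k *: psi x z + psi y z) Ht2).
  - exact: (Lpsi _).1.
  - exact: (lin_comb _ (Lpsi x).1 (Lpsi y).1).
  - by move=> u v; rewrite !(Lpsi _).2 tc.
have [LS SS] : is_lin (tensS_id t2 t3 T) /\
    forall u v w, tensS_id t2 t3 T (t3 u v w) = psi w (T (t2 u v)).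
  apply: lift3_spec => //; split; [|split] => ? ? ? ? ? /=.
  - by rewrite tl HT; exact: ((Lpsi _).1 _ _ _).
  - by rewrite tr HT; exact: ((Lpsi _).1 _ _ _).
  - exact: psiL.
have [LI SI] : is_lin (tens_idS t2 t3 T) /\
    forall u v w, tens_idS t2 t3 T (t3 u v w) = phi u (T (t2 v w)).
  apply: lift3_spec => //; split; [|split] => ? ? ? ? ? /=.
  - exact: phiL.
  - by rewrite tl HT; exact: ((Lphi _).1 _ _ _).
  - by rewrite tr HT; exact: ((Lphi _).1 _ _ _).
have [Lm1 Sm1] : is_lin (tens_id_m t2 t3 alpha mu) /\
    forall u v w, tens_id_m t2 t3 alpha mu (t3 u v w) = t2 (alpha u) (mu (t2 v w)).
  apply: lift3_spec => //; split; [|split] => ? ? ? ? ? /=.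
  - by rewrite Hal tl.
  - by rewrite tl Hmu tr.
  - by rewrite tr Hmu tr.
have [Lm2 Sm2] : is_lin (tens_m_id t2 t3 mu alpha) /\
    forall u v w, tens_m_id t2 t3 mu alpha (t3 u v w) = t2 (mu (t2 u v)) (alpha w).
  apply: lift3_spec => //; split; [|split] => ? ? ? ? ? /=.
  - by rewrite tl Hmu tl.
  - by rewrite tr Hmu tl.
  - by rewrite Hal tr.
have E1 : forall x y, tens_id_m t2 t3 alpha mu (phi x y) = t2 (alpha x) (mu y).
  move=> x; apply: (tensor2_ext (g := fun y => tens_id_m t2 t3 alpha mu (phi x y))
     (h := fun y => t2 (alpha x) (mu y)) Ht2).
  - exact: (lin_comp Lm1 (Lphi x).1).
  - exact: (lin_comp (t2r _) Hmu).
  - by move=> u v /=; rewrite (Lphi x).2 Sm1.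
have E2 : forall x y, tens_m_id t2 t3 mu alpha (psi x y) = t2 (mu y) (alpha x).
  move=> x; apply: (tensor2_ext (g := fun y => tens_m_id t2 t3 mu alpha (psi x y))
     (h := fun y => t2 (mu y) (alpha x)) Ht2).
  - exact: (lin_comp Lm2 (Lpsi x).1).
  - exact: (lin_comp (t2l _) Hmu).
  - by move=> u v /=; rewrite (Lpsi x).2 Sm2.
have G : forall z, mu (tens_id_m t2 t3 alpha mu z) = mu (tens_m_id t2 t3 mu alpha z).
  apply: (tensor3_ext (g := fun z => mu (tens_id_m t2 t3 alpha mu z))
     (h := fun z => mu (tens_m_id t2 t3 mu alpha z)) Ht3).
  - exact: (lin_comp Hmu Lm1).
  - exact: (lin_comp Hmu Lm2).
  - by move=> u v w /=; rewrite Sm1 Sm2 Hass.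
rewrite -E1 -SI -E2 -SS.
set X := t3 a a' a''.
move: (congr1 (fun f => f (tens_idS t2 t3 T X)) H2) => /= ->.
move: (congr1 (fun f => f X) H4) => /= ->.
move: (congr1 (fun f => f (tensS_id t2 t3 T X)) H3) => /= ->.
exact: G.
Qed.
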